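(* Let $X$ be a continuous real-valued random variable (with cumulative distribution function $F$ and probability density function $f$), and fix an integer $k \geq 1$. For each $n > k$, let $Z = Z_n$ be the random variable produced by the SMOTE-$k$ procedure (described in the context) from an i.i.d. sample $X_1, \dots, X_n$ drawn from $X$. Then $Z$ converges to $X$ in probability as $n \to \infty$.
   Context: SMOTE-$k$ procedure: given a sample $X_1,\dots,X_n$ of real numbers and a neighbor rank $1 \le k \le n-1$: (1) choose an index $i$ uniformly at random from $\{1,\dots,n\}$; (2) let $X_{i,(k)}$ be the $k$-th nearest neighbor of $X_i$ among the other sample points $\{X_j : j \neq i\}$, i.e. the point realizing the $k$-th smallest of the distances $|X_j - X_i|$, $j \ne i$; (3) draw $\lambda \sim U(0,1)$ independently; (4) output $Z = X_i + \lambda (X_{i,(k)} - X_i)$. The random variable $X$ appearing in the conclusion is taken to be the sample point $X_i$ from which $Z$ is generated (which has the distribution of $X$), so the convergence means $P(|Z - X_i| > \varepsilon) \to 0$ for every $\varepsilon > 0$. *)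

(* Defs.v *)
From HB Require Import structures.
From mathcomp Require Import all_boot all_order all_algebra.
From mathcomp Require Import all_classical all_reals all_analysis.
Set Implicit Arguments. Unset Strict Implicit. Unset Printing Implicit Defensive.
Import Order.TTheory GRing.Theory Num.Theory.
Import numFieldNormedType.Exports.
Local Open Scope classical_set_scope.
Local Open Scope ring_scope.

(* k-th nearest neighbour (k >= 1) of x i among the other sample points
   x j, j < n, j <> i: the other points are sorted by increasing distance
   to x i (ties broken deterministically by the stable sort) and the k-th
   one (index k-1) is taken. *)
Definition kth_nn {R : realType} (n k : nat) (x : nat -> R) (i : nat) : R :=
  let others := [seq x j | j <- iota 0 n & j != i] in
  nth 0 (sort (fun a b => `|a - x i| <= `|b - x i|) others) k.-1.

Definition smote {R : realType} (n k : nat) (x : nat -> R) (i : nat) (lam : R) : R :=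
  x i + lam * (kth_nn n k x i - x i).

(* Main.v *)
Require Import Defs.
From HB Require Import structures.
From mathcomp Require Import all_boot all_order all_algebra.
From mathcomp Require Import all_classical all_reals all_analysis.
From mathcomp Require Import measurable_realfun.
From mathcomp Require Import zify ring lra.
Import Order.TTheory GRing.Theory Num.Theory.
Import numFieldNormedType.Exports.
Local Open Scope classical_set_scope.
Local Open Scope ring_scope.
Lemma nth_sort_gt (R : realType) (x c : R) (s : seq R) (k : nat) :
  (0 < k)%N -> (k <= size s)%N ->
  (c < `|nth 0 (sort (fun a b : R => `|a - x| <= `|b - x|) s) k.-1 - x|) =
  (count (fun a : R => (`|a - x| <= c)%R) s < k)%N.
Proof.
move=> k0 ks.
set leT := (fun a b : R => `|a - x| <= `|b - x|).
have tot : total leT by move=> a b; exact: le_total.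
have tr : transitive leT by move=> b a e; exact: le_trans.
have rf : reflexive leT by move=> a; exact: lexx.
set s' := sort leT s.
have ss : sorted leT s' := sort_sorted tot s.
have sz : size s' = size s by rewrite size_sort.
have pe : perm_eq s' s by rewrite perm_sort.
set p := (fun a : R => `|a - x| <= c).
rewrite -(permP pe p).
have mono : forall i j, (i <= j)%N -> (j < size s')%N -> leT (nth 0 s' i) (nth 0 s' j).
  move=> i j ij js; apply: (sorted_leq_nth tr rf 0 ss) => //.
  by rewrite inE (leq_ltn_trans ij js).
apply/idP/idP.
- move=> hc.
  rewrite -(cat_take_drop k.-1 s') count_cat.
  have -> : count p (drop k.-1 s') = 0%N.
    apply/eqP; rewrite -leqn0 leqNgt -has_count; apply/hasPn => y /(nthP 0) [m hm <-].
    rewrite nth_drop /p -ltNge; apply: (lt_le_trans hc); apply: mono.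
      exact: leq_addr.
    by rewrite size_drop in hm; rewrite -ltn_subRL.
  rewrite addn0 (leq_ltn_trans (count_size _ _)) // size_take.
  by case: ifP => h; rewrite ?sz in h *; lia.
- apply: contraLR; rewrite -!leNgt => hc.
  rewrite -(cat_take_drop k s') count_cat; have hh : forall a b c : nat, (a <= b -> a <= b + c)%N by move=> *; lia. rewrite -leqNgt; apply: hh.
  have : all p (take k s').
    apply/allP => y /(nthP 0) [m hm <-].
    rewrite size_takel ?sz // in hm.
    rewrite nth_take // /p (le_trans _ hc) //; apply: mono.
      by rewrite -ltnS prednK.
    by rewrite sz prednK // (leq_trans _ ks) // leq_pred.
  by rewrite all_count => /eqP ->; rewrite size_takel ?sz.
Qed.

Lemma bernoulli_ineq (R : realType) (c : R) (n : nat) : 0 <= c ->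
  n%:R * c <= (1 + c) ^+ n.
Proof.
move=> c0; elim: n => [|n IH]; first by rewrite mul0r exprn_ge0 // addr_ge0.
have h1 : 1 <= (1 + c) ^+ n by apply: exprn_ege1; lra.
rewrite exprSr -natr1 mulrDl mul1r mulrDr mulr1.
have : (1 + c) ^+ n * c >= c by rewrite -[X in X <= _]mul1r ler_wpM2r.
lra.
Qed.

Lemma pow_le_geo (R : realType) (m : nat) (a : R) : 0 < a ->
  exists C : R, 0 <= C /\ forall n : nat, n%:R ^+ m <= C * (1 + a) ^+ n.
Proof.
elim: m a => [|m IH] a a0.
  exists 1; split => // n; rewrite expr0 mul1r; apply: exprn_ege1; lra.
pose c := a / (3 * (1 + a)).
have c0 : 0 < c by rewrite /c divr_gt0 //; lra.
have hc : c * (3 * (1 + a)) = a by rewrite /c mulfVK //; lra.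
have [C [C0 HC]] := IH c c0.
exists (C / c); split; first by rewrite divr_ge0 // ltW.
move=> n.
have b := @bernoulli_ineq R c n (ltW c0).
have hsq : (1 + c) ^+ 2 <= 1 + a.
  have c1 : c <= 1 by nra.
  rewrite expr2; nra.
have e1 : n%:R <= (1 + c) ^+ n / c by rewrite ler_pdivlMr.
rewrite exprSr.
apply: (le_trans (y := (C * (1 + c) ^+ n) * ((1 + c) ^+ n / c))).
  apply: ler_pM => //; exact: exprn_ge0.
set x := (1 + c) ^+ n.
have -> : C * x * (x / c) = C / c * (x * x) by ring.
rewrite ler_wpM2l //; first by rewrite divr_ge0 // ltW.
rewrite /x -exprMn -expr2 lerXn2r // ?nnegrE ?exprn_ge0 //; lra.
Qed.

Lemma poly_geo (R : realType) (k : nat) (q : R) : 0 <= q -> q < 1 ->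
  exists D : R, 0 <= D /\ forall n : nat, (k < n)%N -> n%:R ^+ k * q ^+ (n - k) <= D.
Proof.
move=> q0 q1; have [->|qn0] := eqVneq q 0.
  exists 0; split => // n kn; rewrite expr0n; case: eqP => [/eqP|]; first by rewrite subn_eq0 leqNgt kn.
  by rewrite mulr0.
have qp : 0 < q by rewrite lt_def qn0.
have a0 : 0 < q^-1 - 1 by rewrite subr_gt0 invf_gt1.
have [C [C0 HC]] := @pow_le_geo R k (q^-1 - 1) a0.
exists (C / q ^+ k); split; first by rewrite divr_ge0 // exprn_ge0.
move=> n kn; have := HC n; rewrite addrC subrK => h.
have qk : 0 < q ^+ k by rewrite exprn_gt0.
have -> : q ^+ (n - k) = q ^+ n / q ^+ k.
  by rewrite -{2}(subnK (ltnW kn)) exprD mulfK // gt_eqF.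
rewrite mulrA ler_pM2r ?invr_gt0 //.
have qi : 0 < q^-1 by rewrite invr_gt0.
rewrite -(ler_pM2r (exprn_gt0 n qi)) -mulrA -exprMn mulfV ?gt_eqF // expr1n mulr1.
exact: h.
Qed.

Definition pr d (T : measurableType d) (R : realType) (P : probability T R)
  (A : set T) : R := fine (P A).
Arguments pr {d T R} P A.

Lemma prE d (T : measurableType d) (R : realType) (P : probability T R) A :
  measurable A -> P A = (pr P A)%:E.
Proof. by move=> mA; rewrite /pr fineK // fin_num_measure. Qed.

Lemma pr_ge0 d (T : measurableType d) (R : realType) (P : probability T R) A :
  0 <= pr P A.
Proof. exact: fine_ge0. Qed.

Lemma pr_le d (T : measurableType d) (R : realType) (P : probability T R) A B :
  measurable A -> measurable B -> A `<=` B -> pr P A <= pr P B.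
Proof.
move=> mA mB AB; rewrite -lee_fin -!prE //.
by apply: le_measure => //; rewrite inE.
Qed.

Lemma pr_setT d (T : measurableType d) (R : realType) (P : probability T R) :
  pr P setT = 1.
Proof. by rewrite /pr probability_setT. Qed.

Lemma pr_le1 d (T : measurableType d) (R : realType) (P : probability T R) A :
  measurable A -> pr P A <= 1.
Proof. by move=> mA; rewrite -(@pr_setT _ _ _ P); apply: pr_le. Qed.

Lemma pr_C d (T : measurableType d) (R : realType) (P : probability T R) A :
  measurable A -> pr P (~` A) = 1 - pr P A.
Proof.
move=> mA; apply: EFin_inj; rewrite -prE; last exact: measurableC.
by rewrite probability_setC // prE // EFinB.
Qed.

Lemma pr_U2 d (T : measurableType d) (R : realType) (P : probability T R) A B :
  measurable A -> measurable B -> pr P (A `|` B) <= pr P A + pr P B.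
Proof.
move=> mA mB; rewrite -lee_fin EFinD -!prE //; last exact: measurableU.
exact: measureU2.
Qed.

Lemma pr_big d (T : measurableType d) (R : realType) (P : probability T R)
  (I : Type) (s : seq I) (F : I -> set T) :
  (forall i, measurable (F i)) ->
  measurable (\big[setU/set0]_(i <- s) F i) /\
  pr P (\big[setU/set0]_(i <- s) F i) <= \sum_(i <- s) pr P (F i).
Proof.
move=> mF; elim: s => [|a s [IH1 IH2]]; first by rewrite !big_nil /pr measure0.
rewrite !big_cons; split; first exact: measurableU.
apply: (le_trans (@pr_U2 _ _ _ P _ _ (mF a) IH1)).
by rewrite lerD2l.
Qed.

Lemma meas_ler d (T : measurableType d) (R : realType) (f g : T -> R) :
  measurable_fun setT f -> measurable_fun setT g ->
  measurable [set t | f t <= g t].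
Proof.
move=> mf mg; have := measurable_fun_ler mf mg measurableT (I : measurable [set true]).
by rewrite setTI.
Qed.

Lemma meas_ltr d (T : measurableType d) (R : realType) (f g : T -> R) :
  measurable_fun setT f -> measurable_fun setT g ->
  measurable [set t | f t < g t].
Proof.
move=> mf mg; have := measurable_fun_ltr mf mg measurableT (I : measurable [set true]).
by rewrite setTI.
Qed.

Lemma count_meas d (T : measurableType d) (R : realType) (X : nat -> T -> R)
  (i : nat) (c : R) (js : seq nat) (m : nat) :
  (forall j, measurable_fun setT (X j)) ->
  measurable [set t | (count (fun a : R => (`|a - X i t| <= c)%R)
                         [seq X j t | j <- js] < m)%N].
Proof.
move=> mX; elim: js m => [|j js IH] m /=.
  rewrite [X in measurable X](_ : _ = if (0 < m)%N then setT else set0); first by case: ifP.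
  by apply/seteqP; split => t /=; case: ifP.
have mb : measurable [set t | `|X j t - X i t| <= c].
  apply: meas_ler => //; apply: measurableT_comp => //; exact: measurable_funB.
rewrite [X in measurable X](_ : _ = ([set t | `|X j t - X i t| <= c] `&`
    [set t | (count (fun a : R => (`|a - X i t| <= c)%R) [seq X j t | j <- js] < m.-1)%N])
   `|` (~` [set t | `|X j t - X i t| <= c] `&`
    [set t | (count (fun a : R => (`|a - X i t| <= c)%R) [seq X j t | j <- js] < m)%N])).
  by apply: measurableU; apply: measurableI => //; exact: measurableC.
apply/seteqP; split => t /=.
  set r := count _ _; case hb: (`|X j t - X i t| <= c) => /= h.
    by left; split => //; case: m h => //=.
  by right; split => //; apply/negP; rewrite hb.
set r := count _ _; case => -[hb h].
  by rewrite hb /=; case: m h => //=.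
by move/negP/negbTE: hb => ->.
Qed.

Lemma size_others (n i : nat) : (n.-1 <= size [seq j <- iota 0 n | j != i])%N.
Proof.
rewrite size_filter.
have := count_predC (pred1 i) (iota 0 n).
rewrite size_iota (count_uniq_mem _ (iota_uniq 0 n)).
have : ((i \in iota 0 n) <= 1)%N by case: (i \in iota 0 n).
move=> h1 h2.
have -> : count (fun j => j != i) (iota 0 n) = count (predC (pred1 i)) (iota 0 n) by [].
lia.
Qed.

Lemma D_meas d (T : measurableType d) (R : realType) (X : nat -> T -> R)
  (n k i : nat) : (1 <= k)%N -> (k < n)%N ->
  (forall j, measurable_fun setT (X j)) ->
  measurable_fun setT (fun t => `|kth_nn n k (fun j => X j t) i - X i t|).
Proof.
move=> k1 kn mX.
apply: (measurability (@RGenOInfty.G R)); first exact: RGenOInfty.measurableE.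
move=> _ [_ [r ->] <-]; rewrite setTI.
rewrite [X in measurable X](_ : _ = [set t | (count (fun a : R => (`|a - X i t| <= r)%R)
                         [seq X j t | j <- [seq j <- iota 0 n | j != i]] < k)%N]).
  exact: count_meas.
apply/seteqP; split => t /=; rewrite in_itv /= andbT /kth_nn nth_sort_gt //;
  rewrite ?map_comp //.
- rewrite size_map; apply: leq_trans (size_others n i); lia.
- rewrite size_map; apply: leq_trans (size_others n i); lia.
Qed.

Lemma smote_sub (R : realType) (n k : nat) (x : nat -> R) (i : nat) (lam : R) :
  smote n k x i lam - x i = lam * (kth_nn n k x i - x i).
Proof. by rewrite /smote addrAC subrr add0r. Qed.

Lemma E_meas d (T : measurableType d) (R : realType) (X : nat -> T -> R)
  (I : nat -> T -> nat) (Lam : nat -> T -> R) (n k : nat) (eps : R) :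
  (1 <= k)%N -> (k < n)%N ->
  (forall j, measurable_fun setT (X j)) ->
  (forall n, measurable_fun setT (Lam n)) ->
  (forall n i, measurable (I n @^-1` [set i])) ->
  measurable [set t | eps < `| smote n k (fun j => X j t) (I n t) (Lam n t)
                                  - X (I n t) t |].
Proof.
move=> k1 kn mX mL mI.
rewrite [X in measurable X](_ : _ = \bigcup_i (I n @^-1` [set i] `&`
   [set t | eps < `|Lam n t| * `|kth_nn n k (fun j => X j t) i - X i t|])).
  apply: bigcupT_measurable => i; apply: measurableI => //.
  apply: meas_ltr => //; apply: measurable_funM; last exact: D_meas.
  exact: measurableT_comp.
apply/seteqP; split => t /=.
  by move=> h; exists (I n t) => //; split => //=; rewrite -normrM -smote_sub.
by move=> [i _ [/= <-]]; rewrite -normrM -smote_sub.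
Qed.

Lemma bigU_mem (T : Type) (I : eqType) (s : seq I) (F : I -> set T) (t : T) :
  (\big[setU/set0]_(i <- s) F i) t <-> exists i, (i \in s) /\ F i t.
Proof.
elim: s => [|a s IH]; first by rewrite big_nil; split => // -[i []].
rewrite big_cons; split.
  case=> [h|/IH [i [si h]]]; first by exists a; rewrite mem_head.
  by exists i; rewrite in_cons si orbT.
move=> [i []]; rewrite in_cons => /orP [/eqP <-|si] h; first by left.
by right; apply/IH; exists i.
Qed.

Lemma bigU_ord (T : Type) (n : nat) (F : 'I_n -> set T) (t : T) :
  (\big[setU/set0]_(i < n) F i) t <-> exists i, F i t.
Proof.
rewrite bigU_mem; split; first by move=> [i [_ h]]; exists i.
by move=> [i h]; exists i; rewrite mem_index_enum.
Qed.

Lemma bigU_fin (T : Type) (A : finType) (F : A -> set T) (t : T) :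
  (\big[setU/set0]_(i : A) F i) t <-> exists i, F i t.
Proof.
rewrite bigU_mem; split; first by move=> [i [_ h]]; exists i.
by move=> [i h]; exists i; rewrite mem_index_enum.
Qed.

Definition cellb (R : realType) (h : R) (N j : nat) (y : R) : bool :=
  (j%:R <= y / h + N%:R) && (y / h + N%:R < j.+1%:R).
Arguments cellb {R} h N j y.
Definition cell (R : realType) (h : R) (N j : nat) : set R := [set y | cellb h N j y].
Arguments cell {R} h N j.
Definition box (R : realType) (h : R) (N : nat) : set R := [set y | `|y| < N%:R * h].
Arguments box {R} h N.

Definition rect d (T : measurableType d) (R : realType) (X : nat -> T -> R)
  (I : T -> nat) (L : T -> R) (n : nat) (B : nat -> set R) (i : nat) : set T :=
  \bigcap_(j in `I_n) (X j @^-1` B j) `&` I @^-1` [set i] `&` L @^-1` setT.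
Arguments rect {d T R} X I L n B i.

Definition Bf (R : realType) (h : R) (N : nat) (k n : nat) (i j : nat)
  (f : {ffun 'I_k.-1 -> 'I_n}) : nat -> set R :=
  fun l => if l == i then cell h N j
           else if l \in map val (codom f) then setT else ~` cell h N j.
Arguments Bf {R} h N k n i j f.

Lemma cell_close (R : realType) (h : R) (N j : nat) (y z : R) : 0 < h ->
  cellb h N j y -> cellb h N j z -> `|y - z| < h.
Proof.
move=> h0 /andP [a1 a2] /andP [b1 b2].
have e : y - z = (y / h + N%:R - (z / h + N%:R)) * h.
  by rewrite mulrBl !mulrDl !divfK ?gt_eqF //; ring.
rewrite e normrM (gtr0_norm h0) -ltr_pdivlMr // divff ?gt_eqF //.
rewrite -natr1 in a2 b2.
rewrite ltr_norml; apply/andP; split; lra.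
Qed.

Lemma card_near (R : realType) (n i : nat) (x : nat -> R) (eps : R) :
  #|[set l : 'I_n | (val l != i) && (`|x (val l) - x i| <= eps)]%SET| =
  count (fun a : R => (`|a - x i| <= eps)%R) [seq x j | j <- iota 0 n & j != i].
Proof.
rewrite count_map count_filter -val_enum_ord count_map cardE /enum_mem size_filter.
rewrite count_filter; apply: eq_count => l /=.
by rewrite !inE andbT andbC.
Qed.

Lemma cover d (T : measurableType d) (R : realType) (X : nat -> T -> R)
  (I : T -> nat) (L : T -> R) (n k N : nat) (eps : R) :
  (1 <= k)%N -> (k < n)%N -> 0 < eps ->
  [set t | eps < `|smote n k (fun j => X j t) (I t) (L t) - X (I t) t|] `<=`
  (L @^-1` (~` `]0, 1[%classic)) `|` (~` \big[setU/set0]_(i < n) (I @^-1` [set (i : nat)]))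
  `|` \big[setU/set0]_(i < n)
        (rect X I L n (fun l => if l == (i : nat) then ~` box eps N else setT) i
         `|` \big[setU/set0]_(j < N.*2) \big[setU/set0]_(f : {ffun 'I_k.-1 -> 'I_n})
               rect X I L n (Bf eps N k n i j f) i).
Proof.
move=> k1 kn e0 t /= ht.
set x := fun j => X j t.
have [hL|hL] := boolP (L t \in `]0, 1[); last first.
  by left; left.
have [ilt|ige] := ltnP (I t) n; last first.
  left; right; move/bigU_ord => [i /= hi].
  by move: (ltn_ord i); rewrite -hi ltnNge ige.
right; apply/bigU_ord; exists (Ordinal ilt) => /=.
set i := I t.
rewrite in_itv /= in hL; move/andP: hL => [L0 L1].
have hD : eps < `|kth_nn n k x i - x i|.
  rewrite smote_sub normrM in ht.
  apply: (lt_le_trans ht).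
  have hl : `|L t| <= 1 by rewrite ger0_norm ltW.
  by rewrite -[leRHS]mul1r ler_wpM2r.
have szo : (k <= size [seq x j | j <- iota 0 n & j != i])%N.
  rewrite size_map; apply: leq_trans (size_others n i); lia.
have hcnt := hD; rewrite /kth_nn nth_sort_gt // in hcnt.
have [xb|xnb] := boolP (`|x i| < N%:R * eps); last first.
  left; split; [split|] => //.
  move=> l /= _; case: ifP => [/eqP -> |] //.
  by move=> /= h; move/negP: xnb; apply.
right.
have y0 : 0 <= x i / eps + N%:R.
  have : - (N%:R) < x i / eps.
    by rewrite ltr_pdivlMr // mulNr; move: xb; rewrite ltr_norml => /andP [].
  lra.
have y1 : x i / eps + N%:R < (N.*2)%:R.
  have : x i / eps < N%:R.
    by rewrite ltr_pdivrMr //; move: xb; rewrite ltr_norml => /andP [].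
  rewrite -addnn natrD; lra.
set j := Num.trunc (x i / eps + N%:R).
have /andP [j1 j2] := truncn_itv y0.
have jlt : (j < N.*2)%N.
  by rewrite -(ltr_nat R); apply: le_lt_trans j1 y1.
have cj : cellb eps N j (x i) by rewrite /cellb j1 j2.
apply/bigU_ord; exists (Ordinal jlt); apply/bigU_fin.
set S := [set l : 'I_n | (val l != i) && cellb eps N j (x (val l))]%SET.
have Ssub : (#|S| <= #|[set l : 'I_n | (val l != i) && (`|x (val l) - x i| <= eps)%R]%SET|)%N.
  apply: subset_leq_card; apply/fintype.subsetP => l; rewrite !inE => /andP [-> c] /=.
  exact: ltW (@cell_close _ _ _ _ _ _ e0 c cj).
have Sk : (#|S| <= k.-1)%N by move: Ssub; rewrite card_near; lia.
set io := Ordinal ilt.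
exists [ffun o : 'I_k.-1 => nth io (enum S) o].
split; [split|] => //.
move=> l /= ln; rewrite /Bf; case: ifP => [/eqP -> //|lni].
case: ifP => // hnc hc; move/negP: hnc; apply.
set lo := Ordinal ln.
have lS : lo \in S by rewrite inE /= lni.
have hidx : (index lo (enum S) < k.-1)%N.
  by apply: leq_trans Sk; rewrite cardE index_mem mem_enum.
apply/mapP; exists lo => //; apply/codomP; exists (Ordinal hidx).
by rewrite ffunE /= nth_index // mem_enum.
Qed.

Lemma rect_meas d (T : measurableType d) (R : realType) (X : nat -> T -> R)
  (I : T -> nat) (L : T -> R) (n : nat) (B : nat -> set R) (i : nat) :
  (forall j, measurable_fun setT (X j)) ->
  measurable (I @^-1` [set i]) -> (forall l, measurable (B l)) ->
  measurable (rect X I L n B i).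
Proof.
move=> mX mI mB; rewrite /rect preimage_setT setIT; apply: measurableI => //.
apply: bigcap_measurableType => l _; rewrite -[X in measurable X]setTI.
exact: mX.
Qed.

Lemma prod_bound (R : realType) (n : nat) (b : 'I_n -> R) (io : 'I_n) (Q : pred 'I_n) :
  (forall l, 0 <= b l <= 1) ->
  \prod_(l < n) b l <= b io * \prod_(l < n | (l != io) && Q l) b l.
Proof.
move=> hb; rewrite (bigD1 io) //=.
have b0 : 0 <= b io by case/andP: (hb io).
apply: ler_wpM2l => //.
rewrite (bigID Q) /=; apply: ler_piMr.
  by apply: prodr_ge0 => l _; case/andP: (hb l).
by apply: prodr_ile1 => l _; exact: hb.
Qed.

Lemma rect_pr d (T : measurableType d) (R : realType) (P : probability T R)
  (X : nat -> T -> R) (I : nat -> T -> nat) (Lam : nat -> T -> R) (k n i : nat)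
  (B : nat -> set R) :
  (forall j B, measurable B -> P (X j @^-1` B) = P (X 0%N @^-1` B)) ->
  (forall n i, (k < n)%N -> (i < n)%N -> P (I n @^-1` [set i]) = (n%:R^-1)%:E) ->
  (forall n (B : nat -> set R) (S : set nat) (A : set R), (k < n)%N ->
     (forall j, measurable (B j)) -> measurable A ->
     fine (P (\bigcap_(j in `I_n) (X j @^-1` B j) `&` I n @^-1` S `&` Lam n @^-1` A))
     = (\prod_(j < n) fine (P (X j @^-1` B j))) * fine (P (I n @^-1` S))
       * fine (P (Lam n @^-1` A))) ->
  (k < n)%N -> (i < n)%N -> (forall l, measurable (B l)) ->
  pr P (rect X (I n) (Lam n) n B i) =
    (\prod_(l < n) pr P (X 0%N @^-1` B l)) * n%:R^-1.
Proof.
move=> hid hI hind kn ilt mB.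
rewrite /rect /pr hind // hI // preimage_setT probability_setT /= mulr1.
by congr (_ * _); apply: eq_bigr => l _; rewrite hid.
Qed.

Lemma cell_meas (R : realType) (h : R) (N j : nat) : measurable (cell h N j).
Proof.
have mg : measurable_fun setT (fun y : R => y / h + N%:R).
  by apply: measurable_funD => //; apply: measurable_funM.
rewrite /cell /cellb.
rewrite [X in measurable X](_ : _ = [set y | j%:R <= y / h + N%:R] `&` [set y | y / h + N%:R < j.+1%:R]).
  by apply: measurableI; [apply: meas_ler|apply: meas_ltr].
by apply/seteqP; split => y /=; [move/andP|move=> [-> ->]].
Qed.

Lemma box_meas (R : realType) (h : R) (N : nat) : measurable (box h N).
Proof. by apply: meas_ltr => //; exact: measurableT_comp. Qed.

Lemma meas_pre d (T : measurableType d) (R : realType) (X : T -> R) (B : set R) :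
  measurable_fun setT X -> measurable B -> measurable (X @^-1` B).
Proof. by move=> mX mB; rewrite -[X in measurable X]setTI; exact: mX. Qed.

Lemma pr_A d (T : measurableType d) (R : realType) (P : probability T R)
  (X : nat -> T -> R) (I : nat -> T -> nat) (Lam : nat -> T -> R) (k n i N : nat)
  (eps : R) :
  (forall j, measurable_fun setT (X j)) ->
  (forall n i, measurable (I n @^-1` [set i])) ->
  (forall j B, measurable B -> P (X j @^-1` B) = P (X 0%N @^-1` B)) ->
  (forall n i, (k < n)%N -> (i < n)%N -> P (I n @^-1` [set i]) = (n%:R^-1)%:E) ->
  (forall n (B : nat -> set R) (S : set nat) (A : set R), (k < n)%N ->
     (forall j, measurable (B j)) -> measurable A ->
     fine (P (\bigcap_(j in `I_n) (X j @^-1` B j) `&` I n @^-1` S `&` Lam n @^-1` A))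
     = (\prod_(j < n) fine (P (X j @^-1` B j))) * fine (P (I n @^-1` S))
       * fine (P (Lam n @^-1` A))) ->
  (k < n)%N -> (i < n)%N ->
  pr P (rect X (I n) (Lam n) n (fun l => if l == i then ~` box eps N else setT) i)
    <= pr P (X 0%N @^-1` ~` box eps N) * n%:R^-1.
Proof.
move=> mX mI hid hI hind kn ilt.
have mB : forall l, measurable (if l == i then ~` box eps N else setT).
  by move=> l; case: ifP => _ //; apply: measurableC; exact: box_meas.
rewrite (rect_pr _ _ _ _ _ _ _ _ _ _ _ hid hI hind kn ilt mB).
apply: ler_wpM2r; first by rewrite invr_ge0.
set b := fun l : 'I_n => pr P (X 0%N @^-1` (if (l : nat) == i then ~` box eps N else setT)).
have hb : forall l, 0 <= b l <= 1.
  by move=> l; rewrite pr_ge0 pr_le1 //; apply: meas_pre.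
apply: (le_trans (@prod_bound _ _ b (Ordinal ilt) xpred0 hb)).
rewrite big_pred0; last by move=> l; rewrite andbF.
by rewrite mulr1 /b /= eqxx.
Qed.

Lemma card_notcodom (k n : nat) (io : 'I_n) (f : {ffun 'I_k.-1 -> 'I_n}) :
  (1 <= k)%N ->
  (n - k <= #|[pred l : 'I_n | (l != io) && (l \notin codom f)]|)%N.
Proof.
move=> k1.
have h1 := cardC (mem (io :: codom f)).
have h2 := card_size (io :: codom f).
rewrite card_ord in h1; rewrite /= size_codom card_ord in h2.
have -> : #|[pred l : 'I_n | (l != io) && (l \notin codom f)]| =
          #|[predC mem (io :: codom f)]|.
  by apply: eq_card => l; rewrite !inE negb_or.
rewrite prednK // in h2.
have h3 : (#|mem (io :: codom f)| <= k)%N := h2.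
have key : forall a b c m : nat, (a + b)%N = c -> (a <= m)%N -> (c - m <= b)%N by move=> *; lia.
exact: key _ _ _ _ h1 h3.
Qed.

Lemma pr_B d (T : measurableType d) (R : realType) (P : probability T R)
  (X : nat -> T -> R) (I : nat -> T -> nat) (Lam : nat -> T -> R) (k n i N j : nat)
  (eps : R) (f : {ffun 'I_k.-1 -> 'I_n}) :
  (forall j, measurable_fun setT (X j)) ->
  (forall n i, measurable (I n @^-1` [set i])) ->
  (forall j B, measurable B -> P (X j @^-1` B) = P (X 0%N @^-1` B)) ->
  (forall n i, (k < n)%N -> (i < n)%N -> P (I n @^-1` [set i]) = (n%:R^-1)%:E) ->
  (forall n (B : nat -> set R) (S : set nat) (A : set R), (k < n)%N ->
     (forall j, measurable (B j)) -> measurable A ->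
     fine (P (\bigcap_(j in `I_n) (X j @^-1` B j) `&` I n @^-1` S `&` Lam n @^-1` A))
     = (\prod_(j < n) fine (P (X j @^-1` B j))) * fine (P (I n @^-1` S))
       * fine (P (Lam n @^-1` A))) ->
  (1 <= k)%N -> (k < n)%N -> (i < n)%N ->
  pr P (rect X (I n) (Lam n) n (Bf eps N k n i j f) i)
    <= pr P (X 0%N @^-1` cell eps N j) * pr P (X 0%N @^-1` ~` cell eps N j) ^+ (n - k)
       * n%:R^-1.
Proof.
move=> mX mI hid hI hind k1 kn ilt.
have mB : forall l, measurable (Bf eps N k n i j f l).
  move=> l; rewrite /Bf; case: ifP => _; first exact: cell_meas.
  by case: ifP => _ //; apply: measurableC; exact: cell_meas.
rewrite (rect_pr _ _ _ _ _ _ _ _ _ _ _ hid hI hind kn ilt mB).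
apply: ler_wpM2r; first by rewrite invr_ge0.
set b := fun l : 'I_n => pr P (X 0%N @^-1` Bf eps N k n i j f l).
have hb : forall l, 0 <= b l <= 1.
  by move=> l; rewrite pr_ge0 pr_le1 //; apply: meas_pre.
set io := Ordinal ilt.
apply: (le_trans (@prod_bound _ _ b io (fun l => l \notin codom f) hb)).
have -> : b io = pr P (X 0%N @^-1` cell eps N j) by rewrite /b /Bf /= eqxx.
set q := pr P (X 0%N @^-1` ~` cell eps N j).
have q01 : 0 <= q <= 1.
  by rewrite pr_ge0 pr_le1 //; apply: meas_pre => //; apply: measurableC; exact: cell_meas.
apply: ler_wpM2l; first exact: pr_ge0.
rewrite (eq_bigr (fun _ => q)); last first.
  move=> l /andP [lio lf]; rewrite /b /Bf.
  have -> : (l : nat) == i = false.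
    by apply/negbTE; apply: contra lio => /eqP h; apply/eqP; apply: val_inj.
  by rewrite (mem_map val_inj) (negbTE lf).
rewrite prodr_const.
case/andP: q01 => q0 q1.
exact: ler_wiXn2l q0 q1 _ _ (@card_notcodom k n io f k1).
Qed.

Lemma pr_Lbad d (T : measurableType d) (R : realType) (P : probability T R)
  (Lam : nat -> T -> R) (k n : nat) :
  (forall n A, (k < n)%N -> measurable A ->
     P (Lam n @^-1` A) = lebesgue_measure (A `&` `]0, 1[)) ->
  (k < n)%N -> pr P (Lam n @^-1` (~` `]0, 1[%classic)) = 0.
Proof.
move=> hLam kn; rewrite /pr hLam //; last by apply: measurableC; exact: measurable_itv.
by rewrite setICl measure0.
Qed.

Lemma pr_Ibad d (T : measurableType d) (R : realType) (P : probability T R)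
  (I : nat -> T -> nat) (k n : nat) :
  (forall n i, measurable (I n @^-1` [set i])) ->
  (forall n i, (k < n)%N -> (i < n)%N -> P (I n @^-1` [set i]) = (n%:R^-1)%:E) ->
  (k < n)%N -> pr P (~` \big[setU/set0]_(i < n) (I n @^-1` [set (i : nat)])) = 0.
Proof.
move=> mI hI kn.
have mU : measurable (\big[setU/set0]_(i < n) (I n @^-1` [set (i : nat)])).
  by apply: bigsetU_measurable => i _; exact: mI.
rewrite pr_C // /pr measure_bigsetU_ord //; last first.
  apply/trivIsetP => a b _ _ ab; apply/seteqP; split => t //= [ha hb].
  by move/eqP: ab; apply; apply: val_inj; rewrite /= -ha -hb.
rewrite (eq_bigr (fun _ : 'I_n => (n%:R^-1)%:E)%E); last first.
  by move=> i _; apply: hI.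
rewrite sumEFin /= sumr_const card_ord -[n%:R^-1 *+ n]mulr_natr mulVf ?subrr //.
by rewrite pnatr_eq0 -lt0n (leq_ltn_trans _ kn).
Qed.

Lemma key_bound d (T : measurableType d) (R : realType) (P : probability T R)
  (X : nat -> T -> R) (I : nat -> T -> nat) (Lam : nat -> T -> R) (k n N : nat)
  (eps : R) :
  (forall j, measurable_fun setT (X j)) ->
  (forall n, measurable_fun setT (Lam n)) ->
  (forall n i, measurable (I n @^-1` [set i])) ->
  (forall j B, measurable B -> P (X j @^-1` B) = P (X 0%N @^-1` B)) ->
  (forall n i, (k < n)%N -> (i < n)%N -> P (I n @^-1` [set i]) = (n%:R^-1)%:E) ->
  (forall n A, (k < n)%N -> measurable A ->
     P (Lam n @^-1` A) = lebesgue_measure (A `&` `]0, 1[)) ->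
  (forall n (B : nat -> set R) (S : set nat) (A : set R), (k < n)%N ->
     (forall j, measurable (B j)) -> measurable A ->
     fine (P (\bigcap_(j in `I_n) (X j @^-1` B j) `&` I n @^-1` S `&` Lam n @^-1` A))
     = (\prod_(j < n) fine (P (X j @^-1` B j))) * fine (P (I n @^-1` S))
       * fine (P (Lam n @^-1` A))) ->
  (1 <= k)%N -> (k < n)%N -> 0 < eps ->
  pr P [set t | eps < `| smote n k (fun j => X j t) (I n t) (Lam n t) - X (I n t) t |]
  <= pr P (X 0%N @^-1` ~` box eps N) +
     \sum_(j < N.*2) n%:R ^+ k.-1 * (pr P (X 0%N @^-1` cell eps N j) *
                                     pr P (X 0%N @^-1` ~` cell eps N j) ^+ (n - k)).
Proof.
move=> mX mL mI hid hI hLam hind k1 kn e0.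
have cov := @cover _ _ _ X (I n) (Lam n) n k N eps k1 kn e0.
have mE := @E_meas _ _ _ X I Lam n k eps k1 kn mX mL mI.
set dl := pr P (X 0%N @^-1` ~` box eps N).
set S := \sum_(j < N.*2) _.
set A := fun i : 'I_n => rect X (I n) (Lam n) n
           (fun l => if l == (i : nat) then ~` box eps N else setT) i.
set B := fun (i : 'I_n) (j : 'I_N.*2) (f : {ffun 'I_k.-1 -> 'I_n}) =>
           rect X (I n) (Lam n) n (Bf eps N k n i j f) i.
have mA : forall i, measurable (A i).
  move=> i; apply: rect_meas => // l; case: ifP => _ //.
  by apply: measurableC; exact: box_meas.
have mB : forall i j f, measurable (B i j f).
  move=> i j f; apply: rect_meas => // l; rewrite /Bf; case: ifP => _.
    exact: cell_meas.
  by case: ifP => _ //; apply: measurableC; exact: cell_meas.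
have mW : forall i j, measurable (\big[setU/set0]_(f : {ffun 'I_k.-1 -> 'I_n}) B i j f).
  by move=> i j; exact: (@pr_big _ _ _ P _ _ _ (mB i j)).1.
have mV : forall i, measurable (\big[setU/set0]_(j < N.*2)
                                 \big[setU/set0]_(f : {ffun 'I_k.-1 -> 'I_n}) B i j f).
  by move=> i; exact: (@pr_big _ _ _ P _ _ _ (mW i)).1.
have mAV : forall i, measurable (A i `|` \big[setU/set0]_(j < N.*2)
                                 \big[setU/set0]_(f : {ffun 'I_k.-1 -> 'I_n}) B i j f).
  by move=> i; apply: measurableU.
have [mU3 hU3] := @pr_big _ _ _ P _ (index_enum 'I_n) _ mAV.
have mU1 : measurable (Lam n @^-1` (~` `]0, 1[%classic)).
  by apply: meas_pre => //; apply: measurableC; exact: measurable_itv.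
have mU0 : measurable (\big[setU/set0]_(i < n) (I n @^-1` [set (i : nat)])).
  by apply: bigsetU_measurable => i _; exact: mI.
have mU2 := measurableC mU0.
apply: (le_trans (@pr_le _ _ _ P _ _ mE _ cov)).
  by apply: measurableU => //; apply: measurableU.

apply: (le_trans (@pr_U2 _ _ _ P _ _ (measurableU _ _ mU1 mU2) mU3)).
apply: (le_trans (lerD (@pr_U2 _ _ _ P _ _ mU1 mU2) (lexx _))).
rewrite (@pr_Lbad _ _ _ P Lam k n hLam kn) (@pr_Ibad _ _ _ P I k n mI hI kn) !add0r.
apply: (le_trans hU3).
apply: (@le_trans _ _ (\sum_(i < n) ((dl + S) * n%:R^-1))).
  apply: ler_sum => i _.
  apply: (le_trans (@pr_U2 _ _ _ P _ _ (mA i) (mV i))).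
  rewrite mulrDl; apply: lerD.
    exact: (@pr_A _ _ _ P X I Lam k n i N eps mX mI hid hI hind kn (ltn_ord i)).
  apply: (le_trans (@pr_big _ _ _ P _ _ _ (mW i)).2).
  rewrite /S mulr_suml; apply: ler_sum => j _.
  apply: (le_trans (@pr_big _ _ _ P _ _ _ (mB i j)).2).
  apply: (le_trans (ler_sum _ (fun f _ =>
     @pr_B _ _ _ P X I Lam k n i N j eps f mX mI hid hI hind k1 kn (ltn_ord i)))).
  rewrite sumr_const card_ffun !card_ord.
  have -> : forall x : R, x *+ (n ^ k.-1) = x * n%:R ^+ k.-1 by move=> x; rewrite -natrX mulr_natr.
  by rewrite le_eqVlt; apply/orP; left; apply/eqP; ring.
rewrite sumr_const card_ord -[_ *+ n]mulr_natr -mulrA mulVf ?mulr1 //.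
by rewrite pnatr_eq0 -lt0n (leq_ltn_trans _ kn).
Qed.

Lemma term_bound (R : realType) (k : nat) (p q : R) :
  (1 <= k)%N -> 0 <= p -> 0 <= q -> p + q = 1 ->
  exists D : R, 0 <= D /\ forall n : nat, (k < n)%N ->
    n%:R ^+ k.-1 * (p * q ^+ (n - k)) <= D / n%:R.
Proof.
move=> k1 p0 q0 pq.
have [q1|q1] := ltP q 1; last first.
  have -> : p = 0 by lra.
  by exists 0; split => // n kn; rewrite mul0r mulr0 mul0r.
have [D [D0 HD]] := @poly_geo R k q q0 q1.
exists D; split => // n kn.
have n0 : 0 < n%:R :> R by rewrite ltr0n (leq_ltn_trans _ kn).
rewrite ler_pdivlMr //.
apply: le_trans (HD n kn).
have -> : n%:R ^+ k = n%:R ^+ k.-1 * n%:R :> R by rewrite -exprSr prednK.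
have hq : 0 <= q ^+ (n - k) by rewrite exprn_ge0.
have hn : 0 <= n%:R ^+ k.-1 :> R by rewrite exprn_ge0 // ltW.
have p1 : p <= 1 by lra.
have : p * q ^+ (n - k) <= q ^+ (n - k) by rewrite ler_piMl.
move=> h.
have e : n%:R ^+ k.-1 * (p * q ^+ (n - k)) * n%:R =
         (n%:R ^+ k.-1 * n%:R) * (p * q ^+ (n - k)) by ring.
by rewrite e ler_wpM2l // mulr_ge0 // ltW.
Qed.

Lemma trunc_box d (T : measurableType d) (R : realType) (P : probability T R)
  (Y : T -> R) (eps dl : R) :
  measurable_fun setT Y -> 0 < eps -> 0 < dl ->
  exists N : nat, pr P (Y @^-1` ~` box eps N) <= dl.
Proof.
move=> mY e0 dl0.
set F := fun N : nat => Y @^-1` box eps N.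
have mF : forall N, measurable (F N) by move=> N; apply: meas_pre => //; exact: box_meas.
have UF : \bigcup_N F N = setT.
  apply/seteqP; split => // t _.
  have y0 : 0 <= `|Y t| / eps by rewrite divr_ge0 // ltW.
  exists (Num.trunc (`|Y t| / eps)).+1 => //.
  rewrite /F /box /= -ltr_pdivrMr //.
  by case/andP: (truncn_itv y0).
have ndF : {homo F : n m / (n <= m)%N >-> (n <= m)%O}.
  move=> a b ab; rewrite subsetEset => t; rewrite /F /box /= => h; apply: (lt_le_trans h).
  by apply: ler_wpM2r; [exact: ltW | rewrite ler_nat].
have mUF : measurable (\bigcup_N F N) by rewrite UF.
have e1 : P (\bigcup_N F N) = 1%E by rewrite UF probability_setT.
have h := @nondecreasing_cvg_mu _ _ _ P F mF mUF ndF.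
have : (P \o F) x @[x --> \oo] --> 1%E by rewrite -e1; exact: h.
move/fine_cvgP => [_ /cvgrPdist_le /(_ dl dl0) [N0 _ hN0]].
exists N0; have := hN0 N0 (leqnn N0).
rewrite /= preimage_setC (@pr_C _ _ _ P _ (mF N0)) => h2; apply: le_trans h2.
exact: ler_norm.
Qed.

Theorem theorem1 (R : realType) (d : measure_display) (T : measurableType d)
  (P : probability T R)
  (X : nat -> T -> R)          (* i.i.d. sample X_0, X_1, ... *)
  (I : nat -> T -> nat)        (* I n : uniform index in {0,..,n-1} *)
  (Lam : nat -> T -> R)        (* Lam n : uniform lambda in (0,1) *)
  (k : nat) (hk : (1 <= k)%N) :
  (* measurability *)
  (forall j, measurable_fun setT (X j)) ->
  (forall n, measurable_fun setT (Lam n)) ->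
  (forall n i, measurable (I n @^-1` [set i])) ->
  (* X is a continuous random variable with a density f *)
  (exists f : R -> R, (forall x, 0 <= f x) /\ measurable_fun setT f /\
     forall B, measurable B ->
       P (X 0%N @^-1` B) = (\int[lebesgue_measure]_(x in B) (f x)%:E)%E) ->
  (* identically distributed *)
  (forall j B, measurable B -> P (X j @^-1` B) = P (X 0%N @^-1` B)) ->
  (* the index is uniform on {0,..,n-1} *)
  (forall n i, (k < n)%N -> (i < n)%N -> P (I n @^-1` [set i]) = (n%:R^-1)%:E) ->
  (* lambda is uniform on (0,1) *)
  (forall n A, (k < n)%N -> measurable A ->
     P (Lam n @^-1` A) = lebesgue_measure (A `&` `]0, 1[)) ->
  (* X_0,..,X_{n-1}, I n, Lam n are mutually independent *)
  (forall n (B : nat -> set R) (S : set nat) (A : set R), (k < n)%N ->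
     (forall j, measurable (B j)) -> measurable A ->
     fine (P (\bigcap_(j in `I_n) (X j @^-1` B j) `&` I n @^-1` S `&` Lam n @^-1` A))
     = (\prod_(j < n) fine (P (X j @^-1` B j))) * fine (P (I n @^-1` S))
       * fine (P (Lam n @^-1` A))) ->
  (* conclusion: Z_n - X_{I_n} --> 0 in probability *)
  forall eps : R, 0 < eps ->
    (fun n => P [set t | eps < `| smote n k (fun j => X j t) (I n t) (Lam n t)
                                  - X (I n t) t |]) @ \oo --> 0%E.
Proof.
move=> mX mL mI _ hid hI hLam hind eps e0.
have mE : forall n, (k < n)%N -> measurable [set t | eps < `| smote n k (fun j => X j t) (I n t) (Lam n t)
                                  - X (I n t) t |].
  by move=> n kn; exact: (@E_meas _ _ _ X I Lam n k eps hk kn mX mL mI).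
apply/fine_cvgP; split.
  by exists k.+1 => // n /= kn; apply: fin_num_measure; exact: mE.
apply/cvgrPdist_le => dl dl0.
have dl2 : 0 < dl / 2 by rewrite divr_gt0.
have [N hN] := @trunc_box _ _ _ P (X 0%N) eps (dl / 2) (mX 0%N) e0 dl2.
have hD : forall j : 'I_N.*2, exists D : R, 0 <= D /\ forall n : nat, (k < n)%N ->
    n%:R ^+ k.-1 * (pr P (X 0%N @^-1` cell eps N j) *
                    pr P (X 0%N @^-1` ~` cell eps N j) ^+ (n - k)) <= D / n%:R.
  move=> j; apply: term_bound => //; try exact: pr_ge0.
  have mc : measurable (X 0%N @^-1` cell eps N j) by apply: meas_pre => //; exact: cell_meas.
  by rewrite -preimage_setC (@pr_C _ _ _ P _ mc) addrC subrK.
have [Df hDf] := choice hD.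
set Dt := \sum_(j < N.*2) Df j.
have Dt0 : 0 <= Dt by apply: sumr_ge0 => j _; case: (hDf j).
have y0 : 0 <= 2 * Dt / dl by rewrite divr_ge0 // ?mulr_ge0 // ltW.
exists (maxn k.+1 (Num.trunc (2 * Dt / dl)).+1) => // n /=.
rewrite geq_max => /andP [kn tn].
have nD : 2 * Dt / dl < n%:R.
  case/andP: (truncn_itv y0) => _ h; apply: (lt_le_trans h).
  by rewrite ler_nat.
have n0 : 0 < n%:R :> R by rewrite ltr0n (leq_ltn_trans _ kn).
rewrite sub0r normrN ger0_norm; last exact: fine_ge0.
have kb := @key_bound _ _ _ P X I Lam k n N eps mX mL mI hid hI hLam hind hk kn e0.
apply: (le_trans kb).
have hS : \sum_(j < N.*2) n%:R ^+ k.-1 * (pr P (X 0%N @^-1` cell eps N j) *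
                    pr P (X 0%N @^-1` ~` cell eps N j) ^+ (n - k)) <= Dt / n%:R.
  rewrite /Dt mulr_suml; apply: ler_sum => j _.
  by case: (hDf j) => _ h; apply: h.
have hDt : Dt / n%:R <= dl / 2.
  rewrite ler_pdivrMr // ; rewrite ltr_pdivrMr // in nD; lra.
have : pr P (X 0%N @^-1` ~` box eps N) + Dt / n%:R <= dl / 2 + dl / 2 by lra.
move=> h; apply: le_trans (lerD (lexx _) hS) _.
by apply: (le_trans h); lra.
Qed.
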